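(* Let $G$ be a group definable in a first-order structure equipped with a dimension satisfying axioms A1–A4. Let $N$ be a definable normal subgroup of $G$, $H$ a definable subgroup of $G$ containing $N$, and $Y$ a definable subset of $H$ which is large in $H$. Suppose that $G/N$ and $G/N_G(H\setminus Y^H)$ have definable transversals. Then: (a) if $H/N$ is weakly generous in $G/N$, then $Y$ is weakly generous in $G$; (b) if $H/N$ is largely generous in $G/N$, then $Y$ is largely generous in $G$.
   Context: The dimension satisfies, for nonempty definable $A,B$: (A1) for definable $f:A\to B$, $\{b:\dim f^{-1}(b)=m\}$ is definable; (A2) if all fibers of definable $f:A\to B$ have dimension $m$ then $\dim A=\dim f(A)+m$; (A3) $A$ finite iff $\dim A=0$; (A4) $\dim(A\cup B)=\max(\dim A,\dim B)$. The quotient $G/N$ is regarded as a definable group via a definable transversal (a set meeting each coset once), and dimensions in it are computed accordingly. For definable $X\subseteq Y$, $X$ is large in $Y$ if $\dim(Y\setminus X)<\dim Y$. For $X\subseteq G$ and a subgroup $K$, $X^K=\{x^k:x\in X,k\in K\}$; $N_G(Z)$ is the setwise stabilizer of $Z$ under conjugation. A definable $X\subseteq G$ is weakly generous in $G$ if $\dim(X^G)=\dim G$, and largely generous if $X^G$ is large in $G$. *)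

(* Defs.v *)
From Stdlib Require List.
From mathcomp Require Import all_boot.
Set Implicit Arguments.
Unset Strict Implicit.
Unset Printing Implicit Defensive.

(* Tuples M^n are functions 'I_n -> M; subsets are predicates.         *)
Definition tset (M : Type) (n : nat) := ('I_n -> M) -> Prop.

Definition join {M : Type} {m n : nat} (x : 'I_m -> M) (y : 'I_n -> M)
  : 'I_(m + n) -> M :=
  fun i => match split i with inl j => x j | inr k => y k end.
Definition fstp {M : Type} {m n : nat} (z : 'I_(m + n) -> M) : 'I_m -> M :=
  fun j => z (lshift n j).
Definition sndp {M : Type} {m n : nat} (z : 'I_(m + n) -> M) : 'I_n -> M :=
  fun k => z (rshift m k).

Definition fgraph {M : Type} {m n : nat} (A : tset M m)
  (f : ('I_m -> M) -> ('I_n -> M)) : tset M (m + n) :=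
  fun z => A (fstp z) /\ f (fstp z) = sndp z.
Definition fiber {M : Type} {m n : nat} (A : tset M m)
  (f : ('I_m -> M) -> ('I_n -> M)) (b : 'I_n -> M) : tset M m :=
  fun a => A a /\ f a = b.
Definition fimage {M : Type} {m n : nat} (A : tset M m)
  (f : ('I_m -> M) -> ('I_n -> M)) : tset M n :=
  fun b => exists a, A a /\ f a = b.
Definition nonempty {T : Type} (A : T -> Prop) := exists x, A x.
Definition finite_set {T : Type} (A : T -> Prop) :=
  exists s : list T, forall x, A x -> List.In x s.

(* A first-order structure, given through its family of definable      *)
(* (with parameters) sets: closed under boolean combinations, equality *)
(* of coordinates, constants (parameters), substitution of variables   *)
(* and existential quantification.  Equipped with a dimension on       *)
(* definable sets satisfying (A1)-(A4) (stated for nonempty sets).     *)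
Record dimStruct := DimStruct {
  carrier :> Type;
  Def : forall n, tset carrier n -> Prop;
  dim : forall n, tset carrier n -> nat;
  def_ext : forall n (A B : tset carrier n),
    Def A -> (forall x, A x <-> B x) -> Def B;
  def_True : forall n, Def (fun _ : 'I_n -> carrier => True);
  def_compl : forall n (A : tset carrier n), Def A -> Def (fun x => ~ A x);
  def_inter : forall n (A B : tset carrier n),
    Def A -> Def B -> Def (fun x => A x /\ B x);
  def_eq : forall n (i j : 'I_n), Def (fun x : 'I_n -> carrier => x i = x j);
  def_const : forall n (i : 'I_n) (c : carrier),
    Def (fun x : 'I_n -> carrier => x i = c);
  def_reindex : forall m n (g : 'I_m -> 'I_n) (A : tset carrier m),
    Def A -> Def (fun x : 'I_n -> carrier => A (fun i => x (g i)));
  def_proj : forall m n (A : tset carrier (m + n)),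
    Def A -> Def (fun x : 'I_m -> carrier =>
                    exists y : 'I_n -> carrier, A (join x y));
  dim_A1 : forall m n (A : tset carrier m) (B : tset carrier n)
      (f : ('I_m -> carrier) -> ('I_n -> carrier)),
    Def A -> Def B -> nonempty A -> nonempty B ->
    (forall a, A a -> B (f a)) -> Def (fgraph A f) ->
    forall k : nat,
      Def (fun b => B b /\ nonempty (fiber A f b) /\ dim (fiber A f b) = k);
  dim_A2 : forall m n (A : tset carrier m) (B : tset carrier n)
      (f : ('I_m -> carrier) -> ('I_n -> carrier)),
    Def A -> Def B -> nonempty A -> nonempty B ->
    (forall a, A a -> B (f a)) -> Def (fgraph A f) ->
    forall k : nat,
      (forall b, fimage A f b -> dim (fiber A f b) = k) ->
      dim A = (dim (fimage A f) + k)%N;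
  dim_A3 : forall n (A : tset carrier n),
    Def A -> nonempty A -> (finite_set A <-> dim A = 0%N);
  dim_A4 : forall n (A B : tset carrier n),
    Def A -> Def B -> nonempty A -> nonempty B ->
    dim (fun x => A x \/ B x) = maxn (dim A) (dim B)
}.

Arguments Def {d n}.
Arguments dim {d n}.

Record defGroup (S : dimStruct) := DefGroup {
  gn : nat;
  gset : tset S gn;
  gmul : ('I_gn -> S) -> ('I_gn -> S) -> ('I_gn -> S);
  ginv : ('I_gn -> S) -> ('I_gn -> S);
  gone : 'I_gn -> S;
  gset_def : Def gset;
  gmul_def : Def (fun z : 'I_(gn + gn + gn) -> S =>
                    gset (fstp (fstp z)) /\ gset (sndp (fstp z)) /\
                    gmul (fstp (fstp z)) (sndp (fstp z)) = sndp z);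
  gone_in : gset gone;
  gmul_in : forall x y, gset x -> gset y -> gset (gmul x y);
  ginv_in : forall x, gset x -> gset (ginv x);
  gmulA : forall x y z, gset x -> gset y -> gset z ->
    gmul x (gmul y z) = gmul (gmul x y) z;
  gmul1 : forall x, gset x -> gmul gone x = x;
  gmulV : forall x, gset x -> gmul (ginv x) x = gone
}.

Arguments gn {S}.
Arguments gset {S}.
Arguments gmul {S}.
Arguments ginv {S}.
Arguments gone {S}.

Section GroupNotions.
Variable S : dimStruct.
Variable G : defGroup S.
Local Notation T := ('I_(gn G) -> S).
Local Notation "x * y" := (gmul G x y).
Local Notation "x ^-1" := (ginv G x).

Definition gconj (x k : T) : T := k^-1 * (x * k).

Definition subgroup (H : tset S (gn G)) : Prop :=
  (forall x, H x -> gset G x) /\ H (gone G) /\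
  (forall x y, H x -> H y -> H (x * y)) /\ (forall x, H x -> H (x^-1)).

Definition def_subgroup (H : tset S (gn G)) : Prop := Def H /\ subgroup H.

Definition def_normal_subgroup (N : tset S (gn G)) : Prop :=
  def_subgroup N /\ forall x g, N x -> gset G g -> N (gconj x g).

Definition conjset (X K : tset S (gn G)) : tset S (gn G) :=
  fun y => exists x k, X x /\ K k /\ y = gconj x k.

Definition normalizer (Z : tset S (gn G)) : tset S (gn G) :=
  fun g => gset G g /\ (forall z, Z z <-> exists z', Z z' /\ z = gconj z' g).

Definition coset_transversal (K Tr : tset S (gn G)) : Prop :=
  (forall t, Tr t -> gset G t) /\
  forall g, gset G g ->
    exists t, (Tr t /\ K (t^-1 * g)) /\
      forall t', Tr t' -> K (t'^-1 * g) -> t' = t.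

(* G/N realised on a coset_transversal Tr of N in G: a coset xN is represented
   by the unique t in Tr with t^-1 x in N.  The image of X <= G: *)
Definition qimage (N Tr X : tset S (gn G)) : tset S (gn G) :=
  fun t => Tr t /\ exists x, X x /\ N (t^-1 * x).

(* conjugates X^K computed in the quotient group G/N (realised on Tr),
   for X, K subsets of Tr: the representatives of the cosets
   (xN)^(kN) = (k^-1 x k) N. *)
Definition qconjset (N Tr X K : tset S (gn G)) : tset S (gn G) :=
  fun t => Tr t /\ exists x k, X x /\ K k /\ N (t^-1 * gconj x k).

End GroupNotions.

Arguments gconj {S} G.
Arguments subgroup {S} G.
Arguments def_subgroup {S} G.
Arguments def_normal_subgroup {S} G.
Arguments conjset {S} G.
Arguments normalizer {S} G.
Arguments coset_transversal {S} G.
Arguments qimage {S} G.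
Arguments qconjset {S} G.

(* dimension-theoretic notions (dim of the empty set is -oo) *)
Definition dim_lt {S : dimStruct} {n} (A B : tset S n) : Prop :=
  nonempty B /\ (~ nonempty A \/ (dim A < dim B)%N).

Definition large_in {S : dimStruct} {n} (X Y : tset S n) : Prop :=
  (forall x, X x -> Y x) /\ dim_lt (fun y => Y y /\ ~ X y) Y.

Definition dim_eq {S : dimStruct} {n} (A B : tset S n) : Prop :=
  nonempty A /\ nonempty B /\ dim A = dim B.

Definition weakly_generous {S : dimStruct} (G : defGroup S) (X : tset S (gn G)) :=
  dim_eq (conjset G X (gset G)) (gset G).
Definition largely_generous {S : dimStruct} (G : defGroup S) (X : tset S (gn G)) :=
  large_in (conjset G X (gset G)) (gset G).

(* H/N weakly / largely generous in G/N, G/N realised on coset_transversal Tr *)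
Definition q_weakly_generous {S : dimStruct} (G : defGroup S) (N Tr H : tset S (gn G)) :=
  dim_eq (qconjset G N Tr (qimage G N Tr H) Tr) Tr.
Definition q_largely_generous {S : dimStruct} (G : defGroup S) (N Tr H : tset S (gn G)) :=
  large_in (qconjset G N Tr (qimage G N Tr H) Tr) Tr.

Arguments weakly_generous {S} G.
Arguments largely_generous {S} G.
Arguments q_weakly_generous {S} G.
Arguments q_largely_generous {S} G.

(* Main.v *)
From Pilot Require Import Defs.
From mathcomp Require Import all_boot.
From Stdlib Require Import FunctionalExtensionality PropExtensionality ClassicalEpsilon Classical.
Set Implicit Arguments.
Unset Strict Implicit.
Unset Printing Implicit Defensive.

Notation fgr := Pilot.Defs.fgraph.

Section Gen.
Variable S : dimStruct.

Lemma pext n (A B : tset S n) : (forall x, A x <-> B x) -> A = B.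
Proof.
move=> h; apply: functional_extensionality => x.
by apply: propositional_extensionality; exact: h.
Qed.

Lemma fstp_join m n (x : 'I_m -> S) (y : 'I_n -> S) : fstp (join x y) = x.
Proof.
apply: functional_extensionality => j; rewrite /fstp /join.
by rewrite (unsplitK (inl j)).
Qed.

Lemma sndp_join m n (x : 'I_m -> S) (y : 'I_n -> S) : sndp (join x y) = y.
Proof.
apply: functional_extensionality => j; rewrite /sndp /join.
by rewrite (unsplitK (inr j)).
Qed.

Lemma join_fs m n (w : 'I_(m + n) -> S) : join (fstp w) (sndp w) = w.
Proof.
apply: functional_extensionality => i; rewrite /fstp /sndp /join.
case: splitP => [j|k] /= e; congr w; apply/val_inj => /=; by rewrite e.
Qed.

Lemma def_ext' n (A B : tset S n) : (forall x, A x <-> B x) -> Def A -> Def B.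
Proof. by move=> h hA; apply: def_ext hA h. Qed.

Lemma def_or n (A B : tset S n) : Def A -> Def B -> Def (fun x => A x \/ B x).
Proof.
move=> hA hB.
apply: (def_ext' _ (def_compl (def_inter (def_compl hA) (def_compl hB)))).
move=> x; split; first by move/not_and_or; case=> /NNPP; [left|right].
by case=> h [h1 h2].
Qed.

Lemma def_impl n (A B : tset S n) : Def A -> Def B -> Def (fun x => A x -> B x).
Proof.
move=> hA hB; apply: (def_ext' _ (def_or (def_compl hA) hB)).
move=> x; split; first by case=> h ?; [exact: False_ind (h _)|].
by move=> h; case: (classic (A x)) => a; [right; apply: h|left].
Qed.

Lemma def_iff n (A B : tset S n) : Def A -> Def B -> Def (fun x => A x <-> B x).
Proof.
move=> hA hB; apply: (def_ext' _ (def_inter (def_impl hA hB) (def_impl hB hA))).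
by move=> x; split; case.
Qed.

Lemma def_ex n m (Q : ('I_n -> S) -> ('I_m -> S) -> Prop) :
  Def (fun w : 'I_(n + m) -> S => Q (fstp w) (sndp w)) ->
  Def (fun x => exists y, Q x y).
Proof.
move=> h; apply: (def_ext' _ (def_proj h)) => x.
split; case=> y q; exists y.
  by move: q; rewrite fstp_join sndp_join.
by rewrite fstp_join sndp_join.
Qed.

Lemma def_all n m (Q : ('I_n -> S) -> ('I_m -> S) -> Prop) :
  Def (fun w : 'I_(n + m) -> S => Q (fstp w) (sndp w)) ->
  Def (fun x => forall y, Q x y).
Proof.
move=> h; have h1 := def_compl (def_ex (Q := fun x y => ~ Q x y) (def_compl h)).
apply: (def_ext' _ h1) => x; split.
  by move=> hn y; apply: NNPP => hq; apply: hn; exists y.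
by move=> hy [y hq]; apply: hq.
Qed.

Lemma def_allin n m (P : 'I_m -> tset S n) (l : seq 'I_m) :
  (forall i, Def (P i)) -> Def (fun x => forall i, i \in l -> P i x).
Proof.
move=> hP; elim: l => [|a l IH].
  by apply: (def_ext (def_True S n)) => x; split.
apply: (def_ext' _ (def_inter (hP a) IH)) => x; split.
  by case=> h1 h2 i; rewrite in_cons; case/orP => [/eqP->|]; [|apply: h2].
by move=> h; split; [apply: h; rewrite in_cons eqxx | move=> i hi; apply: h;
  rewrite in_cons hi orbT].
Qed.

Lemma def_eqblk n m (g1 g2 : 'I_m -> 'I_n) :
  Def (fun x : 'I_n -> S => (fun j => x (g1 j)) = (fun j => x (g2 j))).
Proof.
have := def_allin (P := fun i (x : 'I_n -> S) => x (g1 i) = x (g2 i)) (enum 'I_m)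
  (fun i => def_eq S _ _).
apply: def_ext' => x; split.
  by move=> h; apply: functional_extensionality => i; apply: h; rewrite mem_enum.
by move=> h i _; exact: (equal_f h i).
Qed.

Lemma def_ptblk n m (g : 'I_m -> 'I_n) (c : 'I_m -> S) :
  Def (fun x : 'I_n -> S => (fun j => x (g j)) = c).
Proof.
have := def_allin (P := fun i (x : 'I_n -> S) => x (g i) = c i) (enum 'I_m)
  (fun i => def_const _ _).
apply: def_ext' => x; split.
  by move=> h; apply: functional_extensionality => i; apply: h; rewrite mem_enum.
by move=> h i _; exact: (equal_f h i).
Qed.

Lemma def_pt n (c : 'I_n -> S) : Def (fun x : 'I_n -> S => x = c).
Proof. exact: (def_ptblk id c). Qed.

Lemma fgr_join m n (A : tset S m) (f : ('I_m -> S) -> ('I_n -> S)) a b :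
  fgr A f (join a b) <-> A a /\ f a = b.
Proof. by rewrite /Defs.fgraph fstp_join sndp_join. Qed.

Lemma def_fimage m n (A : tset S m) (f : ('I_m -> S) -> ('I_n -> S)) :
  Def (fgr A f) -> Def (fimage A f).
Proof.
move=> h.
pose g (i : 'I_(m + n)) : 'I_(n + m) :=
  match split i with inl j => rshift n j | inr k => lshift m k end.
have h1 := def_reindex g h.
have h2 : Def (fun w : 'I_(n + m) -> S => fgr A f (join (sndp w) (fstp w))).
  apply: (def_ext' _ h1) => w.
  have -> : (fun i => w (g i)) = join (sndp w) (fstp w); last by [].
  by apply: functional_extensionality => i; rewrite /g /join; case: (split i).
apply: (def_ext' _ (def_ex (Q := fun b a => fgr A f (join a b)) h2)) => b; split; case=> a.
  by move/fgr_join => [h3 h4]; exists a.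
by case=> h3 h4; exists a => /=; apply/fgr_join.
Qed.

Lemma def_fiber m n (A : tset S m) (f : ('I_m -> S) -> ('I_n -> S)) b :
  Def (fgr A f) -> Def (fiber A f b).
Proof.
move=> h.
have h2 : Def (fun w : 'I_(m + n) -> S => fgr A f (join (fstp w) (sndp w))
                 /\ sndp w = b).
  apply: def_inter; first by apply: (def_ext' _ h) => w; rewrite join_fs.
  by apply: (def_ext' _ (def_ptblk (@rshift m n) b)).
apply: (def_ext' _ (def_ex (Q := fun a y => fgr A f (join a y) /\ y = b) h2)) => a; split.
  by case=> y [/fgr_join [h3 h4] e]; subst.
by case=> h3 h4; exists b; split=> //; apply/fgr_join.
Qed.


Definition bnd n (A : tset S n) (P : nat -> Prop) := ~ nonempty A \/ P (dim A).

Lemma dim_eqext n (A B : tset S n) : (forall x, A x <-> B x) -> dim A = dim B.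
Proof. by move=> h; rewrite (pext h). Qed.

Lemma dim_mono n (A B : tset S n) : Def A -> Def B -> nonempty A ->
  (forall x, A x -> B x) -> dim A <= dim B.
Proof.
move=> dA dB neA sub.
have dC : Def (fun x => B x /\ ~ A x) := def_inter dB (def_compl dA).
have eB : B = (fun x => A x \/ (B x /\ ~ A x)).
  apply: pext => x; split.
    by move=> bx; case: (classic (A x)) => ax; [left|right].
  by case=> [/sub|[]].
case: (classic (nonempty (fun x => B x /\ ~ A x))) => ne.
  by rewrite eB (dim_A4 dA dC neA ne) leq_maxl.
have -> : B = A; last by [].
apply: pext => x; split; last exact: sub.
by move=> bx; apply: NNPP => ax; apply: ne; exists x.
Qed.

Lemma bnd_union n (A B : tset S n) P : Def A -> Def B -> bnd A P -> bnd B P ->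
  bnd (fun x => A x \/ B x) P.
Proof.
move=> dA dB hA hB.
case: (classic (nonempty A)) => nA; case: (classic (nonempty B)) => nB.
- right; rewrite (dim_A4 dA dB nA nB).
  case: hA => // pA; case: hB => // pB.
  by rewrite /maxn; case: ltnP.
- case: hA => // pA; right; rewrite -(dim_eqext (A := A)) //.
  by move=> x; split; [left|case=> // bx; exfalso; apply: nB; exists x].
- case: hB => // pB; right; rewrite -(dim_eqext (A := B)) //.
  by move=> x; split; [right|case=> // ax; exfalso; apply: nA; exists x].
- by left; case=> x [ax|bx]; [apply: nA|apply: nB]; exists x.
Qed.

Lemma bnd_sub n (A B : tset S n) D : Def A -> Def B -> (forall x, A x -> B x) ->
  bnd B (fun d => d < D) -> bnd A (fun d => d < D).
Proof.
move=> dA dB sub [nB|pB].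
  by left => -[x ax]; apply: nB; exists x; apply: sub.
case: (classic (nonempty A)) => nA; last by left.
right; apply: leq_ltn_trans pB; exact: dim_mono.
Qed.

Lemma bnd_bigU n (B : nat -> tset S n) P K :
  (forall k, k <= K -> Def (B k) /\ bnd (B k) P) ->
  Def (fun x => exists k, k <= K /\ B k x) /\ bnd (fun x => exists k, k <= K /\ B k x) P.
Proof.
elim: K => [|K IH] h.
  have e : (fun x => exists k, k <= 0 /\ B k x) = B 0.
    apply: pext => x; split; first by case=> k []; rewrite leqn0 => /eqP ->.
    by move=> bx; exists 0.
  by rewrite e; apply: h.
have [d1 b1] := IH (fun k hk => h k (leqW hk)).
have [d2 b2] := h K.+1 (leqnn _).
have e : (fun x => exists k, k <= K.+1 /\ B k x) =
         (fun x => (exists k, k <= K /\ B k x) \/ B K.+1 x).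
  apply: pext => x; split.
    case=> k []; rewrite leq_eqVlt => /orP [/eqP ->|hk] bx; [right|left] => //.
    by exists k.
  case=> [[k [hk bx]]|bx]; last by exists K.+1.
  by exists k; split => //; apply: leqW.
rewrite e; split; first exact: def_or.
exact: bnd_union.
Qed.

Lemma dim_bij m n (A : tset S m) (f : ('I_m -> S) -> ('I_n -> S)) :
  Def A -> Def (fgr A f) -> nonempty A ->
  (forall a1 a2, A a1 -> A a2 -> f a1 = f a2 -> a1 = a2) ->
  dim A = dim (fimage A f).
Proof.
move=> dA dg [a0 ha0] inj.
have := @dim_A2 S m n A (fun _ => True) f dA (def_True S n) (ex_intro _ a0 ha0)
  (ex_intro _ (f a0) I) (fun _ _ => I) dg 0.
rewrite addn0; apply=> b [a [ha e]].
apply/(dim_A3 (def_fiber b dg) (ex_intro _ a (conj ha e))).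
exists [:: a] => a' [ha' e'] /=; left; apply: inj => //; by rewrite e e'.
Qed.

Lemma dim_image_le m n (A : tset S m) (f : ('I_m -> S) -> ('I_n -> S)) :
  Def A -> Def (fgr A f) -> nonempty A -> dim (fimage A f) <= dim A.
Proof.
move=> dA dg neA.
set B := fimage A f.
have dB : Def B := def_fimage dg.
have neB : nonempty B by case: neA => a ha; exists (f a), a.
have AB : forall a, A a -> B (f a) by move=> a ha; exists a.
pose Bk k := fun b => B b /\ nonempty (fiber A f b) /\ dim (fiber A f b) = k.
have dBk k : Def (Bk k) := dim_A1 dA dB neA neB AB dg k.
have hk : forall k, k <= dim A -> Def (Bk k) /\ bnd (Bk k) (fun d => d <= dim A).
  move=> k _; split => //.
  case: (classic (nonempty (Bk k))) => [[b0 hb0]|]; last by left.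
  right.
  pose Ak := fun a => A a /\ Bk k (f a).
  have dAk : Def Ak.
    apply: (def_ext' _ (def_ex (Q := fun a b => fgr A f (join a b) /\ Bk k b) _)).
      move=> a; split; first by case=> b [/fgr_join [ha e] hb]; subst.
      by case=> ha hb; exists (f a); split => //; apply/fgr_join.
    apply: def_inter; first by apply: (def_ext' _ dg) => w; rewrite join_fs.
    exact: (def_reindex (@rshift m n) (dBk k)).
  have neAk : nonempty Ak.
    by case: (hb0) => _ [[a [ha e]] _]; exists a; split => //; rewrite e.
  have dgk : Def (fgr Ak f).
    apply: (def_ext' _ (def_inter dg (def_reindex (@rshift m n) (dBk k)))) => w.
    rewrite /Defs.fgraph /Ak; split.
      case=> -[ha e] hb; split => //; split => //.
      by change (Bk k (sndp w)) in hb; rewrite e.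
    case=> -[ha hb] e; split; first by split.
    by change (Bk k (sndp w)); rewrite -e.
  have fibk : forall b, fimage Ak f b -> dim (fiber Ak f b) = k.
    move=> b [a [[ha hb] e]]; rewrite -e in hb *.
    rewrite -hb.2.2; apply: dim_eqext => a'; split; first by case=> -[].
    by case=> ha' e'; split => //; split => //; rewrite e'.
  have e2 := dim_A2 dAk (dBk k) neAk (ex_intro _ b0 hb0) (fun a h => h.2) dgk fibk.
  have e3 : fimage Ak f = Bk k.
    apply: pext => b; split; first by case=> a [[_ hb] <-].
    move=> hb; case: (hb) => _ [[a [ha e]] _]; exists a; split => //.
    by split => //; rewrite e.
  rewrite -e3; apply: leq_trans (dim_mono dAk dA neAk (fun a h => h.1)).
  by rewrite e2 leq_addr.
have [dU bU] := bnd_bigU hk.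
have eB : B = (fun b => exists k, k <= dim A /\ Bk k b).
  apply: pext => b; split; last by case=> k [_ []].
  move=> hb; have nf : nonempty (fiber A f b).
    by case: hb => a [ha e]; exists a.
  exists (dim (fiber A f b)); split; last by [].
  apply: dim_mono => //; [exact: def_fiber | by move=> a []].
case: bU; last by rewrite eB.
by rewrite -eB.
Qed.

Lemma re2 p q (P : ('I_p -> S) -> ('I_q -> S) -> Prop) :
  Def (fun z : 'I_(p + q) -> S => P (fstp z) (sndp z)) ->
  forall n (g1 : 'I_p -> 'I_n) (g2 : 'I_q -> 'I_n),
  Def (fun x : 'I_n -> S => P (fun j => x (g1 j)) (fun j => x (g2 j))).
Proof.
move=> h n g1 g2.
pose g (i : 'I_(p + q)) := match split i with inl j => g1 j | inr k => g2 k end.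
apply: (def_ext' _ (def_reindex g h)) => x; cbv beta.
have -> : fstp (fun i => x (g i)) = (fun j => x (g1 j)).
  by apply: functional_extensionality => j; rewrite /fstp /g (unsplitK (inl j)).
have -> : sndp (fun i => x (g i)) = (fun j => x (g2 j)).
  by apply: functional_extensionality => j; rewrite /sndp /g (unsplitK (inr j)).
by [].
Qed.

Lemma re3 p q r (P : ('I_p -> S) -> ('I_q -> S) -> ('I_r -> S) -> Prop) :
  Def (fun z : 'I_(p + q + r) -> S => P (fstp (fstp z)) (sndp (fstp z)) (sndp z)) ->
  forall n (g1 : 'I_p -> 'I_n) (g2 : 'I_q -> 'I_n) (g3 : 'I_r -> 'I_n),
  Def (fun x : 'I_n -> S => P (fun j => x (g1 j)) (fun j => x (g2 j)) (fun j => x (g3 j))).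
Proof.
move=> h n g1 g2 g3.
pose g (i : 'I_(p + q + r)) := match split i with
  | inl i' => match split i' with inl a => g1 a | inr b => g2 b end
  | inr c => g3 c end.
apply: (def_ext' _ (def_reindex g h)) => x; cbv beta.
have -> : fstp (fstp (fun i => x (g i))) = (fun j => x (g1 j)).
  apply: functional_extensionality => j; rewrite /fstp /g.
  by rewrite (unsplitK (inl (lshift q j))) (unsplitK (inl j)).
have -> : sndp (fstp (fun i => x (g i))) = (fun j => x (g2 j)).
  apply: functional_extensionality => j; rewrite /fstp /sndp /g.
  by rewrite (unsplitK (inl (rshift p j))) (unsplitK (inr j)).
have -> : sndp (fun i => x (g i)) = (fun j => x (g3 j)).
  by apply: functional_extensionality => j; rewrite /sndp /g (unsplitK (inr j)).
by [].
Qed.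

End Gen.
Section Grp.
Variable S : dimStruct.
Variable G : defGroup S.
Local Notation T := ('I_(gn G) -> S).
Local Notation Gs := (gset G).
Local Notation "x * y" := (gmul G x y).
Local Notation "x ^-1" := (ginv G x).
Local Notation one := (gone G).

Lemma mulgV' x : Gs x -> x * x^-1 = one.
Proof.
move=> gx; have gy := ginv_in gx; have gyy := ginv_in gy.
rewrite -(gmul1 (gmul_in gx gy)) -{1}(gmulV gy) -gmulA //; last exact: gmul_in.
rewrite (gmulA gy gx gy) (gmulV gx) gmul1 //; exact: gmulV.
Qed.

Lemma mulg1' x : Gs x -> x * one = x.
Proof.
move=> gx; rewrite -(gmulV gx) gmulA ?mulgV' ?gmul1 //; exact: ginv_in.
Qed.

Lemma mulg_cancel a x y : Gs a -> Gs x -> Gs y -> a * x = a * y -> x = y.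
Proof.
move=> ga gx gy e.
by rewrite -(gmul1 gx) -(gmul1 gy) -(gmulV ga) -!gmulA ?e //; exact: ginv_in.
Qed.

Lemma inv_uniq x y : Gs x -> Gs y -> y * x = one -> y = x^-1.
Proof.
move=> gx gy e; apply: (mulg_cancel (a := x)) => //; first exact: ginv_in.
rewrite mulgV' //; apply: (mulg_cancel (a := y)) => //.
  exact: gmul_in. exact: gone_in.
by rewrite gmulA // e gmul1 // mulg1'.
Qed.

Lemma invK x : Gs x -> (x^-1)^-1 = x.
Proof.
move=> gx; symmetry; apply: inv_uniq; [exact: ginv_in|done|exact: mulgV'].
Qed.

Lemma invM x y : Gs x -> Gs y -> (x * y)^-1 = y^-1 * x^-1.
Proof.
move=> gx gy; have gx' := ginv_in gx; have gy' := ginv_in gy.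
symmetry; apply: inv_uniq; [exact: gmul_in|exact: gmul_in|].
rewrite -gmulA //; last exact: gmul_in.
by rewrite (gmulA gx' gx gy) gmulV // gmul1 // gmulV.
Qed.

Lemma inv1 : one^-1 = one.
Proof. symmetry; apply: inv_uniq; try exact: gone_in; by rewrite gmul1 //; exact: gone_in. Qed.

Lemma gconj_in x k : Gs x -> Gs k -> Gs (gconj G x k).
Proof. move=> gx gk; rewrite /gconj; apply: gmul_in; [exact: ginv_in|exact: gmul_in]. Qed.

Lemma gconj1 x : Gs x -> gconj G x one = x.
Proof. by move=> gx; rewrite /gconj inv1 gmul1 ?mulg1' //; apply: gmul_in => //; exact: gone_in. Qed.

Lemma gconjM x a b : Gs x -> Gs a -> Gs b ->
  gconj G (gconj G x a) b = gconj G x (a * b).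
Proof.
move=> gx ga gb; have ga' := ginv_in ga; have gb' := ginv_in gb.
rewrite /gconj invM //.
rewrite -(gmulA gb' ga'); last by apply: gmul_in => //; apply: gmul_in.
congr (_ * _).
by rewrite -(gmulA ga' (gmul_in gx ga) gb) (gmulA gx ga gb).
Qed.

Definition M3 (a b c : T) := Gs a /\ Gs b /\ a * b = c.

Lemma dM3 : Def (fun z : 'I_(gn G + gn G + gn G) -> S =>
  M3 (fstp (fstp z)) (sndp (fstp z)) (sndp z)).
Proof. exact: gmul_def. Qed.

Definition Inv2 (k i : T) := Gs k /\ i = k^-1.

Lemma dInv2 : Def (fun z : 'I_(gn G + gn G) -> S => Inv2 (fstp z) (sndp z)).
Proof.
apply: (def_ext' _ (def_ex (Q := fun z o => M3 (sndp z) (fstp z) o /\ o = one) _)).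
  move=> z; split.
    case=> o [[gi [gk e]] eo]; subst o; split => //; exact: inv_uniq.
  case=> gk ->; exists one; split => //; split; first exact: ginv_in.
  by split => //; exact: gmulV.
apply: def_inter; first by apply: (re3 dM3).
exact: (def_ptblk (@rshift (gn G + gn G) (gn G)) one).
Qed.

Definition Conj3 (x k y : T) := Gs x /\ Gs k /\ y = gconj G x k.

Lemma dConj3 : Def (fun z : 'I_(gn G + gn G + gn G) -> S =>
  Conj3 (fstp (fstp z)) (sndp (fstp z)) (sndp z)).
Proof.
apply: (def_ext' _ (def_ex (Q := fun z i => exists u,
   Inv2 (sndp (fstp z)) i /\ M3 (fstp (fstp z)) (sndp (fstp z)) u /\ M3 i u (sndp z)) _)).
  move=> z; split.
    case=> i [u [[gk ei] [[gx [_ eu]] [gi [gu ey]]]]]; subst.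
    by split => //; split.
  case=> gx [gk ->]; exists (sndp (fstp z))^-1, (fstp (fstp z) * sndp (fstp z)).
  split; first by split.
  split; first by split.
  split; first exact: ginv_in.
  by split => //; exact: gmul_in.
apply: (def_ex (Q := fun w u => Inv2 (sndp (fstp (fstp w))) (sndp w) /\
   M3 (fstp (fstp (fstp w))) (sndp (fstp (fstp w))) u /\ M3 (sndp w) u (sndp (fstp w)))).
apply: def_inter; first by apply: (re2 dInv2).
by apply: def_inter; apply: (re3 dM3).
Qed.

Lemma def_conjset (X K : tset S (gn G)) : Def X -> Def K ->
  (forall x, X x -> Gs x) -> (forall k, K k -> Gs k) -> Def (conjset G X K).
Proof.
move=> dX dK sX sK.
apply: (def_ext' _ (def_ex (Q := fun y x => exists k, X x /\ K k /\ Conj3 x k y) _)).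
  move=> y; split.
    by case=> x [k [hx [hk [_ [_ e]]]]]; exists x, k.
  case=> x [k [hx [hk e]]]; exists x, k; split => //; split => //.
  by split; [exact: sX|split; [exact: sK|]].
apply: (def_ex (Q := fun w k => X (sndp w) /\ K k /\ Conj3 (sndp w) k (fstp w))).
apply: def_inter; first by apply: (def_reindex _ dX).
apply: def_inter; first by apply: (def_reindex _ dK).
by apply: (re3 dConj3).
Qed.

Lemma def_crel (K : tset S (gn G)) : Def K ->
  Def (fun z : 'I_(gn G + gn G) -> S =>
    Gs (fstp z) /\ Gs (sndp z) /\ K ((sndp z)^-1 * fstp z)).
Proof.
move=> dK.
apply: (def_ext' _ (def_ex (Q := fun z i => exists p,
   Inv2 (sndp z) i /\ M3 i (fstp z) p /\ K p) _)).
  move=> z; split.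
    case=> i [p [[gt ei] [[gi [ga ep]] hp]]]; subst.
    by split => //; split.
  case=> ga [gt hk]; exists (sndp z)^-1, ((sndp z)^-1 * fstp z).
  split; first by split.
  by split => //; split; [exact: ginv_in|split].
apply: (def_ex (Q := fun w p => Inv2 (sndp (fstp w)) (sndp w) /\
   M3 (sndp w) (fstp (fstp w)) p /\ K p)).
apply: def_inter; first by apply: (re2 dInv2).
apply: def_inter; first by apply: (re3 dM3).
by apply: (def_reindex _ dK).
Qed.

Lemma def_fix2 (P : T -> T -> Prop) c :
  Def (fun z : 'I_(gn G + gn G) -> S => P (fstp z) (sndp z)) -> Def (fun a => P a c).
Proof.
move=> h.
apply: (def_ext' _ (def_ex (Q := fun a y => P a y /\ y = c) _)).
  by move=> a; split; [case=> y [hp e]; subst|move=> hp; exists c].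
apply: def_inter; first exact: h.
exact: (def_ptblk (@rshift (gn G) (gn G)) c).
Qed.

Lemma def_fix3 (P : T -> T -> T -> Prop) c :
  Def (fun z : 'I_(gn G + gn G + gn G) -> S => P (fstp (fstp z)) (sndp (fstp z)) (sndp z)) ->
  Def (fun z : 'I_(gn G + gn G) -> S => P c (fstp z) (sndp z)).
Proof.
move=> h.
apply: (def_ext' _ (def_ex (Q := fun z y => P y (fstp z) (sndp z) /\ y = c) _)).
  by move=> a; split; [case=> y [hp e]; subst|move=> hp; exists c].
apply: def_inter; first by apply: (re3 h).
exact: (def_ptblk (@rshift (gn G + gn G) (gn G)) c).
Qed.

Definition rep (K Tr : tset S (gn G)) (g : T) : T :=
  epsilon (inhabits one) (fun t => Tr t /\ K (t^-1 * g)).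

Lemma repP K Tr g : coset_transversal G K Tr -> Gs g ->
  Tr (rep K Tr g) /\ K ((rep K Tr g)^-1 * g).
Proof.
move=> [_ h] gg; rewrite /rep.
apply: (epsilon_spec (inhabits one) (fun t => Tr t /\ K (t^-1 * g))).
by have [t [ht _]] := h g gg; exists t.
Qed.

Lemma rep_uniq K Tr g t : coset_transversal G K Tr -> Gs g -> Tr t ->
  K (t^-1 * g) -> rep K Tr g = t.
Proof.
move=> hT gg ht hk; have [_ h] := hT; have [t0 [_ u]] := h g gg.
rewrite (u t ht hk); have [h1 h2] := repP hT gg; exact: u.
Qed.

Lemma def_repgraph K Tr A : Def K -> Def Tr -> coset_transversal G K Tr ->
  Def A -> (forall a, A a -> Gs a) -> Def (fgr A (rep K Tr)).
Proof.
move=> dK dTr hT dA sA.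
have h := def_inter (def_reindex (@lshift (gn G) (gn G)) dA)
   (def_inter (def_reindex (@rshift (gn G) (gn G)) dTr) (def_crel dK)).
apply: (def_ext' _ h) => z; rewrite /Defs.fgraph; split.
  case=> ha [ht [ga [gt hk]]]; split => //; apply: rep_uniq => //.
case=> ha e; have ga := sA _ ha; have [ht hk] := repP hT ga.
rewrite e in ht hk; split => //; split => //; split => //; split => //.
by have [st _] := hT; apply: st.
Qed.

Lemma dim_fib K Tr A : Def K -> Def Tr -> coset_transversal G K Tr ->
  (forall k, K k -> Gs k) ->
  Def A -> (forall a, A a -> Gs a) -> nonempty A ->
  (forall a0 a, A a0 -> Gs a -> K ((rep K Tr a0)^-1 * a) -> A a) ->
  dim A = (dim (fimage A (rep K Tr)) + dim K)%N.
Proof.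
move=> dK dTr hT sK dA sA [a0 ha0] clos.
have stT : forall t, Tr t -> Gs t by case: hT.
have dg := def_repgraph dK dTr hT dA sA.
apply: (dim_A2 dA dTr (ex_intro _ a0 ha0) (ex_intro _ _ (repP hT (sA _ ha0)).1)
   (fun a ha => (repP hT (sA _ ha)).1) dg).
move=> b [a1 [ha1 e1]].
have hb : Tr b by rewrite -e1; exact: (repP hT (sA _ ha1)).1.
have gb := stT _ hb; have gb' := ginv_in gb.
pose F := fun a => Gs a /\ Gs b /\ K (b^-1 * a).
have eF : fiber A (rep K Tr) b = F.
  apply: pext => a; split.
    case=> ha e; have := repP hT (sA _ ha); rewrite e => -[_ hk].
    by split; [exact: sA|split].
  case=> ga [_ hk]; split; first by apply: (clos a1) => //; rewrite e1.
  exact: rep_uniq.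
rewrite eF.
have dF : Def F :=
  def_fix2 (P := fun a t => Gs a /\ Gs t /\ K (t^-1 * a)) b (def_crel dK).
have dgF : Def (fgr F (fun a => b^-1 * a)).
  apply: (def_ext' _ (def_inter (def_reindex (@lshift (gn G) (gn G)) dF)
     (def_fix3 (P := M3) (b^-1) dM3))) => z; rewrite /Defs.fgraph; split.
    by case=> hF [_ [_ e]].
  by case=> hF e; split => //; split => //; split => //; case: hF.
rewrite (dim_bij dF dgF).
- apply: dim_eqext => k; split; first by case=> a [[_ [_ hk]] <-].
  move=> hk; exists (b * k); have gk := sK _ hk.
  split; last by rewrite gmulA // gmulV // gmul1.
  split; first exact: gmul_in.
  by split => //; rewrite gmulA // gmulV // gmul1.
- by exists a1; rewrite -eF; split.
- move=> x y [gx _] [gy _]; exact: mulg_cancel.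
Qed.

Lemma dim_prod (A B : tset S (gn G)) : Def A -> Def B -> nonempty A -> nonempty B ->
  Def (fun w : 'I_(gn G + gn G) -> S => A (fstp w) /\ B (sndp w)) /\
  dim (fun w : 'I_(gn G + gn G) -> S => A (fstp w) /\ B (sndp w)) = (dim A + dim B)%N.
Proof.
move=> dA dB [a0 ha0] [b0 hb0].
set P := fun w : 'I_(gn G + gn G) -> S => A (fstp w) /\ B (sndp w).
have dP : Def P.
  apply: def_inter; [exact: (def_reindex (@lshift (gn G) (gn G)) dA)
                    |exact: (def_reindex (@rshift (gn G) (gn G)) dB)].
split => //.
have neP : nonempty P by exists (join a0 b0); rewrite /P fstp_join sndp_join.
have dg : Def (fgr P (@fstp S (gn G) (gn G))).
  apply: def_inter; first exact: (def_reindex (@lshift (gn G + gn G) (gn G)) dP).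
  by apply: def_eqblk.
have e : dim P = (dim (fimage P (@fstp S (gn G) (gn G))) + dim B)%N.
  apply: (dim_A2 dP dA neP (ex_intro _ a0 ha0) (fun w hw => hw.1) dg).
  move=> a [w0 [hw0 e0]].
  have dF := def_fiber a dg.
  have dgF : Def (fgr (fiber P (@fstp S (gn G) (gn G)) a) (@sndp S (gn G) (gn G))).
    apply: def_inter; first exact: (def_reindex (@lshift (gn G + gn G) (gn G)) dF).
    by apply: def_eqblk.
  rewrite (dim_bij dF dgF).
  - apply: dim_eqext => b; split; first by case=> w [[[_ hb] _] <-].
    move=> hb; exists (join a b); rewrite /fiber /P fstp_join sndp_join.
    by split => //; split => //; rewrite -e0; case: hw0.
  - by exists w0.
  - move=> w1 w2 [_ e1] [_ e2] e3.
    by rewrite -(join_fs w1) -(join_fs w2) e1 e2 e3.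
rewrite e; congr (_ + _)%N.
apply: dim_eqext => a; split; first by case=> w [[hw _] <-].
by move=> ha; exists (join a b0); rewrite /P fstp_join sndp_join.
Qed.

End Grp.
Section Norm.
Variable S : dimStruct.
Variable G : defGroup S.
Local Notation T := ('I_(gn G) -> S).
Local Notation Gs := (gset G).
Local Notation "x * y" := (gmul G x y).
Local Notation "x ^-1" := (ginv G x).
Local Notation one := (gone G).
Variable N : tset S (gn G).
Hypothesis hN : def_normal_subgroup G N.

Lemma N_sub x : N x -> Gs x. Proof. by case: hN => -[_ [h _]] _; apply: h. Qed.
Lemma N1 : N one. Proof. by case: hN => -[_ [_ [h _]]] _. Qed.
Lemma NM x y : N x -> N y -> N (x * y). Proof. by case: hN => -[_ [_ [_ [h _]]]] _; apply: h. Qed.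
Lemma NV x : N x -> N (x^-1). Proof. by case: hN => -[_ [_ [_ [_ h]]]] _; apply: h. Qed.
Lemma NJ x g : N x -> Gs g -> N (gconj G x g). Proof. by case: hN => _ h; apply: h. Qed.

Definition eqv (a b : T) := N (a^-1 * b).

Lemma eqv_refl a : Gs a -> eqv a a.
Proof. by move=> ga; rewrite /eqv gmulV //; exact: N1. Qed.

Lemma eqv_sym a b : Gs a -> Gs b -> eqv a b -> eqv b a.
Proof.
move=> ga gb h; rewrite /eqv; have := NV h.
by rewrite invM ?invK //; exact: ginv_in.
Qed.

Lemma eqv_trans a b c : Gs a -> Gs b -> Gs c -> eqv a b -> eqv b c -> eqv a c.
Proof.
move=> ga gb gc h1 h2; rewrite /eqv; have := NM h1 h2.
have ga' := ginv_in ga; have gb' := ginv_in gb.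
rewrite -gmulA //; last exact: gmul_in.
by rewrite (gmulA gb gb' gc) mulgV' // gmul1.
Qed.

Lemma eqv_mul a a' b b' : Gs a -> Gs a' -> Gs b -> Gs b' ->
  eqv a a' -> eqv b b' -> eqv (a * b) (a' * b').
Proof.
move=> ga ga' gb gb' h1 h2; rewrite /eqv.
have gai := ginv_in ga; have gbi := ginv_in gb.
have gn1 : Gs (a^-1 * a') by exact: gmul_in.
have := NM (NJ h1 gb) h2; rewrite /gconj.
have e1 : (b^-1 * ((a^-1 * a') * b)) * (b^-1 * b') = b^-1 * ((a^-1 * a') * b').
  have gbb : Gs (b^-1 * b') by exact: gmul_in.
  rewrite -(gmulA gbi (gmul_in gn1 gb) gbb) -(gmulA gn1 gb gbb).
  by rewrite (gmulA gb gbi gb') mulgV' // gmul1.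
rewrite e1 invM // -(gmulA gbi gai) //; last exact: gmul_in.
by rewrite (gmulA gai ga' gb').
Qed.

Lemma eqv_inv a a' : Gs a -> Gs a' -> eqv a a' -> eqv (a^-1) (a'^-1).
Proof.
move=> ga ga' h; rewrite /eqv invK //.
have gai := ginv_in ga; have gai' := ginv_in ga'.
have := NJ (NV h) gai; rewrite /gconj invK // invM // invK //.
by rewrite -(gmulA gai' ga gai) mulgV' // mulg1'.
Qed.

Lemma eqv_conj x x' k k' : Gs x -> Gs x' -> Gs k -> Gs k' ->
  eqv x x' -> eqv k k' -> eqv (gconj G x k) (gconj G x' k').
Proof.
move=> gx gx' gk gk' h1 h2; rewrite /gconj.
apply: eqv_mul; try exact: ginv_in; try exact: gmul_in.
  exact: eqv_inv.
exact: eqv_mul.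
Qed.

End Norm.
Section Main.
Variable S : dimStruct.
Variable G : defGroup S.
Local Notation T := ('I_(gn G) -> S).
Local Notation Gs := (gset G).
Local Notation "x * y" := (gmul G x y).
Local Notation "x ^-1" := (ginv G x).
Local Notation one := (gone G).
Variables N H Y TrN TrK : tset S (gn G).
Hypothesis hN : def_normal_subgroup G N.
Hypothesis hH : def_subgroup G H.
Hypothesis NH : forall x, N x -> H x.
Hypothesis dY : Def Y.
Hypothesis YH : forall y, Y y -> H y.
Hypothesis lY : large_in Y H.
Hypothesis dTrN : Def TrN.
Hypothesis tN : coset_transversal G N TrN.
Let YH' := conjset G Y H.
Let Z := fun h => H h /\ ~ YH' h.
Let K := normalizer G Z.
Hypothesis dTrK : Def TrK.
Hypothesis tK : coset_transversal G K TrK.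

Lemma mulKg h x : Gs h -> Gs x -> h * (h^-1 * x) = x.
Proof. by move=> gh gx; rewrite gmulA ?mulgV' ?gmul1 //; exact: ginv_in. Qed.

Let sH : forall x, H x -> Gs x. Proof. by case: hH => _ [h _]. Qed.
Let dH : Def H. Proof. by case: hH. Qed.
Let H1 : H one. Proof. by case: hH => _ [_ [h _]]. Qed.
Let HM x y : H x -> H y -> H (x * y). Proof. by case: hH => _ [_ [_ [h _]]]; apply: h. Qed.
Let HV x : H x -> H (x^-1). Proof. by case: hH => _ [_ [_ [_ h]]]; apply: h. Qed.
Let HJ x k : H x -> H k -> H (gconj G x k).
Proof. by move=> hx hk; rewrite /gconj; apply: HM; [apply: HV|apply: HM]. Qed.
Let sY y : Y y -> Gs y. Proof. by move=> h; apply: sH; apply: YH. Qed.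
Let dGs : Def Gs. Proof. exact: gset_def. Qed.
Let dN : Def N. Proof. by case: hN => -[]. Qed.
Let sTr t : TrN t -> Gs t. Proof. by case: tN => h _; apply: h. Qed.
Let sTrK t : TrK t -> Gs t. Proof. by case: tK => h _; apply: h. Qed.
Let dYH : Def YH'. Proof. exact: def_conjset. Qed.
Let dZ : Def Z. Proof. exact: def_inter dH (def_compl dYH). Qed.
Let sZ z : Z z -> Gs z. Proof. by case=> h _; apply: sH. Qed.
Let sK g : K g -> Gs g. Proof. by case. Qed.

Let gconj_inv z h : Gs z -> Gs h -> gconj G (gconj G z h) (h^-1) = z.
Proof.
move=> gz gh; rewrite gconjM //; last exact: ginv_in.
by rewrite mulgV' // gconj1.
Qed.

Let gconj_inv' z h : Gs z -> Gs h -> gconj G (gconj G z (h^-1)) h = z.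
Proof.
move=> gz gh; rewrite gconjM //; last exact: ginv_in.
by rewrite gmulV // gconj1.
Qed.

Let dK : Def K.
Proof.
have h : Def (fun g => Gs g /\ forall z, Z z <-> exists z', Z z' /\ Conj3 z' g z).
  apply: def_inter => //.
  apply: (def_all (Q := fun g z => Z z <-> exists z', Z z' /\ Conj3 z' g z)).
  apply: def_iff; first exact: (def_reindex (@rshift (gn G) (gn G)) dZ).
  apply: (def_ex (Q := fun w z' => Z z' /\ Conj3 z' (fstp w) (sndp w))).
  apply: def_inter; first exact: (def_reindex (@rshift (gn G + gn G) (gn G)) dZ).
  by apply: (re3 (@dConj3 S G)).
apply: (def_ext' _ h) => g; split; case=> gg hz; split => // z.
  rewrite hz; split; case=> z' [hz' e]; exists z'; split => //.
    by case: e => _ [_ ->].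
  by rewrite e; split; [exact: sZ|split].
rewrite hz; split; case=> z' [hz' e]; exists z'; split => //.
  by rewrite e; split; [exact: sZ|split].
by case: e => _ [_ ->].
Qed.

Let HK h : H h -> K h.
Proof.
move=> hh; have gh := sH hh; split => // z; split.
  move=> hz; have gz := sZ hz.
  exists (gconj G z (h^-1)); split; last by rewrite gconj_inv'.
  split; first by case: hz => hz _; apply: HJ => //; apply: HV.
  case=> y [k [hy [hk e]]]; case: hz => _; apply.
  exists y, (k * h); split => //; split; first exact: HM.
  by rewrite -(gconjM (sY hy) (sH hk) gh) -e gconj_inv'.
case=> z' [[hz' nz'] ->]; split; first exact: HJ.
case=> y [k [hy [hk e]]]; apply: nz'.
exists y, (k * h^-1); split => //; split; first by apply: HM => //; apply: HV.
rewrite -(gconjM (sY hy) (sH hk) (ginv_in gh)).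
by rewrite -e (gconj_inv (sH hz') gh).
Qed.

Let dimGsK : dim Gs = (dim TrK + dim K)%N.
Proof.
rewrite (dim_fib dK dTrK tK sK dGs (fun a h => h) (ex_intro _ one (gone_in G))) //.
congr (_ + _)%N; apply: dim_eqext => t; split.
  by case=> g [gg <-]; case: (repP tK gg).
move=> ht; exists t; split; first exact: sTrK.
apply: rep_uniq => //; first exact: sTrK.
by rewrite (gmulV (sTrK ht)); exact: HK H1.
Qed.

Let dimGsN : dim Gs = (dim TrN + dim N)%N.
Proof.
rewrite (dim_fib dN dTrN tN (N_sub hN) dGs (fun a h => h) (ex_intro _ one (gone_in G))) //.
congr (_ + _)%N; apply: dim_eqext => t; split.
  by case=> g [gg <-]; case: (repP tN gg).
move=> ht; exists t; split; first exact: sTr.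
apply: rep_uniq => //; first exact: sTr.
by rewrite (gmulV (sTr ht)); exact: N1.
Qed.

Let Yne : nonempty Y.
Proof.
apply: NNPP => nY; case: lY => _ [_ h].
have e : (fun y => H y /\ ~ Y y) = H.
  apply: pext => x; split; first by case.
  by move=> hx; split => // yx; apply: nY; exists x.
rewrite e in h; case: h => [h|]; last by rewrite ltnn.
by apply: h; exists one.
Qed.

Let YinYH y : Y y -> YH' y.
Proof. by move=> hy; exists y, one; split => //; split => //; rewrite (gconj1 (sY hy)). Qed.

Let dZlt : nonempty Z -> dim Z < dim H.
Proof.
move=> [z hz].
have dHY : Def (fun y => H y /\ ~ Y y) := def_inter dH (def_compl dY).
have sub : forall x, Z x -> H x /\ ~ Y x.
  by move=> x [hx nx]; split => // yx; apply: nx; apply: YinYH.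
case: lY => _ [_ [h|h]].
  by exfalso; apply: h; exists z; apply: sub.
apply: leq_ltn_trans h; apply: dim_mono => //; by exists z.
Qed.

Let HG := conjset G H Gs.
Let YG := conjset G Y Gs.
Let ZG := conjset G Z Gs.
Let dHG : Def HG. Proof. exact: def_conjset. Qed.
Let dYG : Def YG. Proof. exact: def_conjset. Qed.
Let dZG : Def ZG. Proof. exact: def_conjset. Qed.

Let HG_split y : HG y <-> YG y \/ ZG y.
Proof.
split.
  case=> h [g [hh [gg ->]]].
  case: (classic (YH' h)) => [[y0 [k [hy [hk e]]]]|nh].
    left; exists y0, (k * g); split => //; split; first by apply: gmul_in => //; apply: sH.
    by rewrite e (gconjM (sY hy) (sH hk) gg).
  by right; exists h, g.
case=> [[y0 [g [hy [gg ->]]]]|[z [g [[hz _] [gg ->]]]]]; last by exists z, g.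
by exists y0, g; split => //; apply: YH.
Qed.

Let ZGsmall : bnd ZG (fun d => d < dim Gs).
Proof.
case: (classic (nonempty Z)) => neZ; last first.
  by left; case=> y [z [g [hz _]]]; apply: neZ; exists z.
have neTrK : nonempty TrK by exists (rep K TrK one); case: (repP tK (gone_in G)).
pose Pz := fun w : 'I_(gn G + gn G) -> S => TrK (fstp w) /\ Z (sndp w).
pose phi := fun w : 'I_(gn G + gn G) -> S => gconj G (sndp w) ((fstp w)^-1).
have [dPz ePz] := dim_prod dTrK dZ neTrK neZ.
have dg : Def (fgr Pz phi).
  have h : Def (fun z : 'I_(gn G + gn G + gn G) -> S => Pz (fstp z) /\
     exists i, Inv2 (fstp (fstp z)) i /\ Conj3 (sndp (fstp z)) i (sndp z)).
    apply: def_inter; first exact: (def_reindex (@lshift (gn G + gn G) (gn G)) dPz).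
    apply: (def_ex (Q := fun z i => Inv2 (fstp (fstp z)) i /\ Conj3 (sndp (fstp z)) i (sndp z))).
    apply: def_inter; first by apply: (re2 (@dInv2 S G)).
    by apply: (re3 (@dConj3 S G)).
  apply: (def_ext' _ h) => z; rewrite /Defs.fgraph; split.
    by case=> hp [i [[_ ->] [_ [_ ->]]]].
  case=> hp <-; split => //; exists (fstp (fstp z))^-1.
  case: hp => ht hz; split; first by split => //; apply: sTrK.
  by split; [apply: sZ|split => //; apply: ginv_in; apply: sTrK].
have neP : nonempty Pz.
  by case: neTrK neZ => t ht [z hz]; exists (join t z); rewrite /Pz fstp_join sndp_join.
have sub : forall y, ZG y -> fimage Pz phi y.
  move=> y [z [g [hz [gg ->]]]].
  have gz := sZ hz; have gg' := ginv_in gg.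
  set t := rep K TrK (g^-1).
  have [ht hk] := repP tK gg'; rewrite -/t in ht hk.
  have gt := sTrK ht; have gt' := ginv_in gt.
  set k := t^-1 * g^-1 in hk.
  have gk : Gs k by apply: gmul_in.
  case: (hk) => _ hkz; have [z' [hz' ez]] := proj1 (hkz z) hz.
  exists (join t z'); rewrite /Pz /phi fstp_join sndp_join; split; first by [].
  have eg : g = k^-1 * t^-1.
    rewrite /k invM // invK // invK //.
    by rewrite -gmulA // mulgV' // mulg1'.
  have gz' := sZ hz'.
  rewrite eg -gconjM //; last exact: ginv_in.
  by rewrite ez gconj_inv.
have dIm := def_fimage dg.
apply: (bnd_sub dZG dIm sub); right.
apply: (leq_ltn_trans (dim_image_le dPz dg neP)); rewrite ePz dimGsK ltn_add2l.
apply: (leq_trans (dZlt neZ)); apply: dim_mono => //; by exists one.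
Qed.

Let qc := qconjset G N TrN (qimage G N TrN H) TrN.
Let repN := rep N TrN.

Let eqvN := @eqv S G N.

Let qc_eq : fimage HG repN = qc.
Proof.
apply: pext => t; split.
  case=> y [[h [g [hh [gg ->]]]] <-].
  have gh := sH hh; have gy := gconj_in gh gg.
  have [ht hn] := repP tN gy.
  have [hx hnx] := repP tN gh; have [hk hnk] := repP tN gg.
  split => //; exists (repN h), (repN g); split.
    by split => //; exists h.
  split => //.
  apply: (eqv_trans hN (sTr ht) gy (gconj_in (sTr hx) (sTr hk))); first exact: hn.
  apply: eqv_conj => //; [exact: sTr|exact: sTr| |]; apply: eqv_sym => //; exact: sTr.
case=> ht [x [k [[hx [h [hh hxh]]] [hk hn]]]].
have gx := sTr hx; have gk := sTr hk; have gh := sH hh.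
exists (gconj G h k); split; first by exists h, k; split => //; split.
apply: rep_uniq => //; first exact: gconj_in.
apply: (eqv_trans hN (sTr ht) (gconj_in gx gk) (gconj_in gh gk)) => //.
apply: eqv_conj => //; exact: eqv_refl.
Qed.

Let HG_sat a0 a : HG a0 -> Gs a -> eqvN a0 a -> HG a.
Proof.
case=> h [g [hh [gg e]]] ga hn.
have gh := sH hh; have gg' := ginv_in gg.
exists (gconj G a (g^-1)), g; split; last by split => //; rewrite gconj_inv'.
have gh' : Gs (gconj G a g^-1) by exact: gconj_in.
have hq : eqvN h (gconj G a g^-1).
  have -> : h = gconj G a0 (g^-1) by rewrite e gconj_inv.
  apply: eqv_conj => //; [rewrite e; exact: gconj_in|exact: eqv_refl].
rewrite -(mulKg gh gh'); apply: HM => //; exact: NH.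
Qed.

Let fib_clos (A : tset S (gn G)) a0 a : Gs a0 -> Gs a ->
  N ((repN a0)^-1 * a) -> eqvN a0 a.
Proof.
move=> g0 ga hn; have [ht hn0] := repP tN g0.
apply: (eqv_trans hN g0 (sTr ht) ga) => //.
by apply: eqv_sym => //; exact: sTr.
Qed.

Let sHG y : HG y -> Gs y.
Proof. by case=> h [g [hh [gg ->]]]; apply: gconj_in => //; apply: sH. Qed.

Let dimHG : nonempty HG -> dim HG = (dim qc + dim N)%N.
Proof.
move=> ne; rewrite -qc_eq; apply: dim_fib => //.
- exact: N_sub.
- move=> a0 a h0 ga hn; apply: (HG_sat h0 ga).
  exact: (fib_clos HG (sHG h0) ga hn).
Qed.

Let CG := fun y => Gs y /\ ~ HG y.
Let dCG : Def CG. Proof. exact: def_inter dGs (def_compl dHG). Qed.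

Let dimCG : nonempty CG -> dim CG = (dim (fun t => TrN t /\ ~ qc t) + dim N)%N.
Proof.
move=> ne.
have -> : (fun t => TrN t /\ ~ qc t) = fimage CG repN.
  apply: pext => t; split.
    case=> ht nq; exists t; split.
      split; first exact: sTr.
      by move=> hg; apply: nq; rewrite -qc_eq; exists t; split => //; apply: rep_uniq => //;
        [exact: sTr|rewrite (gmulV (sTr ht)); exact: N1].
    apply: rep_uniq => //; [exact: sTr|rewrite (gmulV (sTr ht)); exact: N1].
  case=> y [[gy ny] <-]; have [ht hn] := repP tN gy; split => //.
  rewrite -qc_eq; case=> a [ha ea]; apply: ny.
  have ga := sHG ha.
  apply: (HG_sat ha gy); apply: (fib_clos HG ga gy).
  by rewrite ea.
apply: dim_fib => //.
- exact: N_sub.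
- by move=> y [].
- move=> a0 a [g0 n0] ga hn; split => // hg; apply: n0.
  apply: (HG_sat hg g0); apply: eqv_sym => //.
  exact: (fib_clos HG g0 ga hn).
Qed.

Let dqc : Def qc.
Proof.
rewrite -qc_eq; apply: def_fimage; apply: def_repgraph => //.
Qed.

Lemma partA : q_weakly_generous G N TrN H -> weakly_generous G Y.
Proof.
move=> [neq [neT e]].
have neHG : nonempty HG.
  by case: neq => t; rewrite -/qc -qc_eq; case=> a [ha _]; exists a.
have eHG : dim HG = dim Gs by rewrite dimHG // -/qc e dimGsN.
have neYG : nonempty YG.
  by case: Yne => y hy; exists y, y, one; split => //; split; [exact: gone_in|rewrite (gconj1 (sY hy))].
split => //; split; first by exists one; exact: gone_in.
have eHG' : HG = (fun y => YG y \/ ZG y) by apply: pext; exact: HG_split.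
case: (classic (nonempty ZG)) => nZ.
  move: eHG; rewrite eHG' (dim_A4 dYG dZG neYG nZ).
  case: ZGsmall => [//|lt].
  rewrite /maxn; case: ltnP => // _ h; by rewrite h ltnn in lt.
rewrite -eHG eHG'; apply: dim_eqext => y; split; first by left.
by case=> // hz; exfalso; apply: nZ; exists y.
Qed.

Lemma partB : q_largely_generous G N TrN H -> largely_generous G Y.
Proof.
move=> [_ [_ hq]].
split.
  by move=> y [x [g [hy [gg ->]]]]; apply: gconj_in => //; apply: sY.
split; first by exists one; exact: gone_in.
have hCG : bnd CG (fun d => d < dim Gs).
  case: (classic (nonempty CG)) => ne; last by left.
  right; rewrite dimCG // dimGsN ltn_add2r.
  case: hq => // h; exfalso; apply: h.
  case: ne => y [gy ny]; exists (repN y); have [ht hn] := repP tN gy; split => //.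
  rewrite -/qc -qc_eq; case=> a [ha ea]; apply: ny.
  apply: (HG_sat ha gy); apply: (fib_clos HG (sHG ha) gy); by rewrite ea.
have hU := bnd_union dCG dZG hCG ZGsmall.
apply: (bnd_sub (def_inter dGs (def_compl dYG)) (def_or dCG dZG) _ hU).
move=> y [gy ny]; case: (classic (HG y)) => hg; last by left.
by case: (proj1 (HG_split y) hg) => // ?; right.
Qed.

End Main.

Theorem proposition5p1 (S : dimStruct) (G : defGroup S)
    (N H Y TrN : tset S (gn G)) :
  def_normal_subgroup G N ->
  def_subgroup G H ->
  (forall x, N x -> H x) ->
  Def Y -> (forall y, Y y -> H y) -> large_in Y H ->
  Def TrN -> coset_transversal G N TrN ->
  (exists TrK, Def TrK /\
     coset_transversal G (normalizer G (fun h => H h /\ ~ conjset G Y H h)) TrK) ->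
  (q_weakly_generous G N TrN H -> weakly_generous G Y) /\
  (q_largely_generous G N TrN H -> largely_generous G Y).
Proof.
move=> hN hH NH dY YH lY dTrN tN [TrK [dTrK tK]]; split.
  exact: (partA hN hH NH dY YH lY dTrN tN dTrK tK).
exact: (partB hN hH NH dY YH lY dTrN tN dTrK tK).
Qed.
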